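(* Let $I$ be a finite or infinite non-empty index set and let $\mathbb{K}$ be a positive commutative monoid. The following are equivalent: (1) $\mathbb{K}$ has the transportation property; (2) $\mathbb{K}^I$ has the transportation property; (3) $\mathbb{K}^I_{\mathrm{fin}}$ has the transportation property.
   Context: Positive: $p+q=0\Rightarrow p=q=0$. $\mathbb{K}^I$ is the monoid of all maps $f:I\to K$ with pointwise addition $(f+g)(i)=f(i)+g(i)$ and the constant-$0$ map as neutral element; $\mathbb{K}^I_{\mathrm{fin}}$ is its submonoid of maps $f$ with $f(i)\ne0$ for only finitely many $i$. A monoid $(M,+,0)$ has the transportation property if for all positive integers $m,n$ and all $b\in M^m$, $c\in M^n$ with $b_1+\dots+b_m=c_1+\dots+c_n$ there is $(d_{ij})\in M^{m\times n}$ with $\sum_j d_{ij}=b_i$ for all $i$ and $\sum_i d_{ij}=c_j$ for all $j$. *)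

(* Defs.v *)
From HB Require Import structures.
From Stdlib Require List.
From mathcomp Require Import all_boot all_order all_algebra.
Set Implicit Arguments. Unset Strict Implicit. Unset Printing Implicit Defensive.
Import GRing.Theory.
Local Open Scope ring_scope.

Definition transportation (M : Type) (add : M -> M -> M) (zero : M) : Prop :=
  forall (m n : nat) (b : 'I_m -> M) (c : 'I_n -> M),
    (0 < m)%N -> (0 < n)%N ->
    \big[add/zero]_(i < m) b i = \big[add/zero]_(j < n) c j ->
    exists d : 'I_m -> 'I_n -> M,
      (forall i, \big[add/zero]_(j < n) d i j = b i) /\
      (forall j, \big[add/zero]_(i < m) d i j = c j).

Definition positive_monoid (K : nmodType) : Prop :=
  forall p q : K, p + q = 0 -> p = 0 /\ q = 0.

Definition fun_add (I : Type) (K : nmodType) (f g : I -> K) : I -> K :=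
  fun i => f i + g i.
Definition fun_zero (I : Type) (K : nmodType) : I -> K := fun _ => 0.

Definition fin_supp (I : Type) (K : nmodType) (f : I -> K) : Prop :=
  exists s : seq I, forall i, f i != 0 -> List.In i s.

Definition finfunsupp (I : Type) (K : nmodType) := {f : I -> K | fin_supp f}.

Lemma fin_supp_add (I : Type) (K : nmodType) (f g : I -> K) :
  fin_supp f -> fin_supp g -> fin_supp (fun_add f g).
Proof.
move=> [s Hs] [t Ht]; exists (s ++ t) => i Hi.
apply List.in_or_app.
case: (eqVneq (f i) 0) => [Hf|Hf]; last by left; apply: Hs.
right; apply: Ht; apply: contra Hi => /eqP Hg.
by rewrite /fun_add Hf Hg addr0.
Qed.

Lemma fin_supp_zero (I : Type) (K : nmodType) : fin_supp (@fun_zero I K).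
Proof. by exists [::] => i; rewrite /fun_zero eqxx. Qed.

Definition finfun_add (I : Type) (K : nmodType) (f g : finfunsupp I K)
  : finfunsupp I K :=
  exist _ (fun_add (proj1_sig f) (proj1_sig g))
    (fin_supp_add (proj2_sig f) (proj2_sig g)).

Definition finfun_zero (I : Type) (K : nmodType) : finfunsupp I K :=
  exist _ (@fun_zero I K) (fin_supp_zero I K).

(* Main.v *)
Require Import Defs.
From mathcomp Require Import all_boot all_order all_algebra.
From Stdlib Require Import ClassicalEpsilon FunctionalExtensionality ProofIrrelevance.
Import GRing.Theory.

Lemma evalE (I : Type) (K : nmodType) (m : nat) (F : 'I_m -> I -> K) x :
  (\big[@fun_add I K/@fun_zero I K]_(i < m) F i) x = (\sum_(i < m) F i x)%R.
Proof. by apply: (big_morph (fun f => f x)). Qed.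

Lemma valE (I : Type) (K : nmodType) (m : nat) (F : 'I_m -> finfunsupp I K) :
  proj1_sig (\big[@finfun_add I K/@finfun_zero I K]_(i < m) F i)
  = \big[@fun_add I K/@fun_zero I K]_(i < m) proj1_sig (F i).
Proof. by apply: (big_morph (@proj1_sig _ _)). Qed.

Lemma ffs_inj (I : Type) (K : nmodType) (f g : finfunsupp I K) :
  proj1_sig f = proj1_sig g -> f = g.
Proof.
case: f g => f Hf [g Hg] /= E; subst g; f_equal; apply: proof_irrelevance.
Qed.

Lemma pos_sum (K : nmodType) : positive_monoid K ->
  forall n (F : 'I_n -> K), (\sum_(j < n) F j = 0)%R -> forall j, F j = 0%R.
Proof.
move=> pos; elim=> [|n IH] F H j; first by case: j.
rewrite big_ord_recl in H; have [H1 H2] := pos _ _ H.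
case: (unliftP ord0 j) => [j'|] ->; last by [].
exact: (IH (fun i => F (lift ord0 i)) H2).
Qed.

Theorem proposition30 (I : Type) (K : nmodType) :
  inhabited I -> positive_monoid K ->
  [<-> transportation (@GRing.add K) (0 : K)%R;
       transportation (@fun_add I K) (@fun_zero I K);
       transportation (@finfun_add I K) (@finfun_zero I K)].
Proof.
move=> [i0] pos; tfae.
- move=> T m n b c m0 n0 E.
  have H : forall x, exists d : 'I_m -> 'I_n -> K,
      (forall i, (\sum_(j < n) d i j)%R = b i x) /\
      (forall j, (\sum_(i < m) d i j)%R = c j x).
    move=> x; apply: T => //.
    by rewrite -!evalE E.
  pose D x := proj1_sig (constructive_indefinite_description _ (H x)).
  have HD x := proj2_sig (constructive_indefinite_description _ (H x)).
  exists (fun i j x => D x i j); split.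
  + move=> i; apply: functional_extensionality => x; rewrite evalE.
    exact: (HD x).1.
  + move=> j; apply: functional_extensionality => x; rewrite evalE.
    exact: (HD x).2.
- move=> T m n b c m0 n0 E.
  have E' : \big[@fun_add I K/@fun_zero I K]_(i < m) proj1_sig (b i)
          = \big[@fun_add I K/@fun_zero I K]_(j < n) proj1_sig (c j).
    by rewrite -!valE E.
  have [d [Hb Hc]] := T m n _ _ m0 n0 E'.
  have fs : forall i j, fin_supp (d i j).
    move=> i j; case: (proj2_sig (b i)) => s Hs; exists s => x Hx.
    apply: Hs; apply: contra Hx => /eqP Hz.
    have : (\sum_(j < n) d i j x)%R = 0%R by rewrite -evalE Hb.
    by move/(@pos_sum K pos) => ->.
  exists (fun i j => exist _ (d i j) (fs i j)); split.
  + by move=> i; apply: ffs_inj; rewrite valE /= Hb.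
  + by move=> j; apply: ffs_inj; rewrite valE /= Hc.
- move=> T m n b c m0 n0 E.
  pose dl (k : K) : I -> K :=
    fun x => if excluded_middle_informative (x = i0) then k else 0%R.
  have fsd k : fin_supp (dl k).
    exists [:: i0] => x; rewrite /dl.
    case: excluded_middle_informative => [Hx|Hx] H; first by left; rewrite Hx.
    by rewrite eqxx in H.
  have ev k : dl k i0 = k.
    by rewrite /dl; case: excluded_middle_informative.
  have ev0 k x : x <> i0 -> dl k x = 0%R.
    by move=> Hx; rewrite /dl; case: excluded_middle_informative.
  pose e k : finfunsupp I K := exist _ (dl k) (fsd k).
  have E' : \big[@finfun_add I K/@finfun_zero I K]_(i < m) e (b i)
          = \big[@finfun_add I K/@finfun_zero I K]_(j < n) e (c j).
    apply: ffs_inj; rewrite !valE; apply: functional_extensionality => x.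
    rewrite !evalE.
    have [Hx|Hx] := excluded_middle_informative (x = i0).
      subst x.
      transitivity (\sum_(i < m) b i)%R; first by apply: eq_bigr => i _; exact: ev.
      rewrite E.
      by apply: eq_bigr => i _; symmetry; exact: ev.
    rewrite big1; last by move=> i _; exact: ev0.
    by rewrite big1 //; move=> i _; exact: ev0.
  have [d [Hb Hc]] := T m n _ _ m0 n0 E'.
  exists (fun i j => proj1_sig (d i j) i0); split.
  + move=> i.
    transitivity ((proj1_sig (\big[@finfun_add I K/@finfun_zero I K]_(j < n) d i j)) i0).
      by rewrite valE evalE.
    by rewrite Hb /=; exact: ev.
  + move=> j.
    transitivity ((proj1_sig (\big[@finfun_add I K/@finfun_zero I K]_(i < m) d i j)) i0).
      by rewrite valE evalE.
    by rewrite Hc /=; exact: ev.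
Qed.
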